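(* Let $0<p<1$, $G\sim D(n,p)$. Fix a tower vector $h=(h_1,\dots,h_s)$ of positive integers summing to $n$, and a tower decomposition $H=(H_1,\dots,H_s)$ (a partition of $\{1,\dots,n\}$ into ordered sets) with $|H_i|=h_i$. (a) $\Pr(h(G)=h) = w(h)/\sum_{h'} w(h')$, where the sum ranges over all tower vectors $h'$ (compositions of $n$) and $$w(h)=\binom{n}{h_1,\dots,h_s}\prod_{k=2}^{s}\frac{\left(1-(1-p)^{h_{k-1}}\right)^{h_k}}{(1-p)^{h_k\sum_{i=1}^{k-1}h_i}}.$$ (b) Conditional on the event that $H$ is the tower decomposition of $G$, the parent sets $\mathrm{Pa}(v)$, $v\in\{1,\dots,n\}$, are mutually independent; vertices $v\in H_1$ have $\mathrm{Pa}(v)=\emptyset$; and for $v\in H_j$ with $j\ge 2$ and $S\subseteq \bigcup_{i=1}^{j-1}H_i$, $$\Pr(\mathrm{Pa}(v)=S)=\begin{cases} C\left(\frac{p}{1-p}\right)^{|S|} & \text{if } S\cap H_{j-1}\ne\emptyset,\\ 0 & \text{otherwise,}\end{cases}$$ where $C$ is the normalizing constant (depending on $j$ and $H$), and $\Pr(\mathrm{Pa}(v)=S)=0$ for other $S$.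
   Context: $D(n,p)$ is the distribution on DAGs with vertex set $\{1,\dots,n\}$ assigning each DAG with $e$ edges probability proportional to $(p/(1-p))^e$. $\mathrm{Pa}(v)$ is the set of vertices $u$ with an edge $u\to v$; a source is a vertex with no parents. The tower decomposition of a DAG $G$ is $(H_1,\dots,H_s)$ where $H_1$ is the set of sources of $G$, $H_2$ the set of sources of $G$ with $H_1$ removed, $H_3$ the set of sources of $G$ with $H_1\cup H_2$ removed, etc., until all vertices are used; the tower vector is $h(G)=(|H_1|,\dots,|H_s|)$. $\binom{n}{h_1,\dots,h_s}$ is the multinomial coefficient. *)

(* Defs.v *)
From mathcomp Require Import all_boot all_order all_algebra.
Set Implicit Arguments. Unset Strict Implicit. Unset Printing Implicit Defensive.
Import Order.TTheory GRing.Theory Num.Theory.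
Local Open Scope ring_scope.

(* A directed graph on {0,...,n-1} given by its parent sets: G v = Pa(v);
   edge u -> v iff u \in G v. *)
Definition pgraph (n : nat) := {ffun 'I_n -> {set 'I_n}}.

Definition is_dag n (G : pgraph n) : bool :=
  [forall u : 'I_n, forall v : 'I_n,
     (u \in G v) ==> ~~ connect (fun a b : 'I_n => a \in G b) v u].

(* iterated source removal; R = set of remaining vertices *)
Fixpoint tower_aux n (G : pgraph n) (fuel : nat) (R : {set 'I_n})
  : seq {set 'I_n} :=
  match fuel with
  | 0 => [::]
  | fuel'.+1 =>
      if R == set0 then [::]
      else let S := [set v in R | G v :&: R == set0] in
           S :: tower_aux G fuel' (R :\: S)
  end.

(* tower decomposition (H_1, ..., H_s) of G (n steps suffice for a DAG) *)
Definition tower n (G : pgraph n) : seq {set 'I_n} := tower_aux G n [set: 'I_n].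

Definition tower_vec n (G : pgraph n) : seq nat :=
  map (fun A : {set 'I_n} => #|A|) (tower G).

Definition nedges n (G : pgraph n) : nat := (\sum_(v : 'I_n) #|G v|)%N.

Definition dag_weight (R : realFieldType) (p : R) n (G : pgraph n) : R :=
  (p / (1 - p)) ^+ nedges G.

Definition PrD (R : realFieldType) (n : nat) (p : R) (E : pred (pgraph n)) : R :=
  (\sum_(G : pgraph n | is_dag G && E G) dag_weight p G) /
  (\sum_(G : pgraph n | is_dag G) dag_weight p G).

Definition condPrD (R : realFieldType) (n : nat) (p : R)
  (E F : pred (pgraph n)) : R :=
  PrD p (fun G => E G && F G) / PrD p F.

Definition multinom (R : realFieldType) (n : nat) (h : seq nat) : R :=
  (n`!)%:R / \prod_(x <- h) (x`!)%:R.

Definition tower_w (R : realFieldType) (n : nat) (p : R) (h : seq nat) : R :=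
  multinom R n h *
  \prod_(1 <= k < size h)
     ((1 - (1 - p) ^+ nth 0%N h k.-1) ^+ nth 0%N h k /
      (1 - p) ^+ (nth 0%N h k * (\sum_(i < k) nth 0%N h i))%N).

Definition is_composition (n : nat) (h : seq nat) : bool :=
  all (fun x => 0 < x)%N h && (sumn h == n).

(* sum of w(h') over all compositions h' of n: compositions of n have length
   s <= n and parts <= n, so they are exactly the (map val t) with
   t : s.-tuple 'I_n.+1, s <= n, satisfying is_composition *)
Definition tower_w_total (R : realFieldType) (n : nat) (p : R) : R :=
  \sum_(s < n.+1) \sum_(t : s.-tuple 'I_n.+1 | is_composition n (map val t))
     tower_w n p (map val t).

Definition is_ordered_partition n (H : seq {set 'I_n}) : bool :=
  all (fun A : {set 'I_n} => A != set0) H &&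
  (\bigcup_(A <- H) A == [set: 'I_n]) &&
  [forall i : 'I_(size H), forall j : 'I_(size H),
     (i != j) ==> [disjoint nth set0 H i & nth set0 H j]].

(* Main.v *)
Require Import Defs.
From mathcomp Require Import all_boot all_order all_algebra.
From mathcomp Require Import ring lra.
Set Implicit Arguments. Unset Strict Implicit. Unset Printing Implicit Defensive.
Import Order.TTheory GRing.Theory Num.Theory.
Local Open Scope ring_scope.
Definition blk {n} (H : seq {set 'I_n}) (u : 'I_n) : nat :=
  find (fun A : {set 'I_n} => u \in A) H.

Fixpoint opart {n} (X : {set 'I_n}) (H : seq {set 'I_n}) : bool :=
  match H with
  | [::] => X == set0
  | A :: H' => (A != set0) && (A \subset X) && opart (X :\: A) H'
  end.

Arguments blk : simpl never.

Lemma blk_cons n (A : {set 'I_n}) H u :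
  blk (A :: H) u = if u \in A then 0%N else (blk H u).+1.
Proof. by []. Qed.

Lemma opart_mem n (X : {set 'I_n}) H u :
  opart X H -> (u \in X) = (blk H u < size H)%N.
Proof.
elim: H X => [|A H IH] X /=.
  by move/eqP->; rewrite inE.
case/andP=> /andP[_ sAX] oH; rewrite blk_cons.
case: ifP => uA /=; first by rewrite (subsetP sAX).
by rewrite ltnS -(IH _ oH) inE uA.
Qed.

Lemma opart_nth n (X : {set 'I_n}) H u i :
  opart X H -> (i < size H)%N -> (u \in nth set0 H i) = (blk H u == i).
Proof.
elim: H X i => [|A H IH] X i //= /andP[/andP[_ sAX] oH].
case: i => [|i] ilt; rewrite blk_cons; first by case: (u \in A).
rewrite ltnS in ilt; rewrite (IH _ _ oH ilt).
case: ifP => // uA; apply/negbTE; apply/eqP => bi.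
have := opart_mem u oH; rewrite inE uA bi ilt /=. by [].
Qed.

Lemma opart_size n (X : {set 'I_n}) H : opart X H -> (size H <= #|X|)%N.
Proof.
elim: H X => [|A H IH] X //= /andP[/andP[nA sAX] oH].
apply: leq_ltn_trans (IH _ oH) _.
rewrite cardsD (setIidPr sAX).
have h1 : (0 < #|A|)%N by rewrite card_gt0.
have h2 : (#|A| <= #|X|)%N by apply: subset_leq_card.
by rewrite ltn_subrL h1 (leq_trans h1 h2).
Qed.

Lemma opart_sum n (X : {set 'I_n}) H :
  opart X H -> sumn (map (fun A : {set 'I_n} => #|A|) H) = #|X| /\ all (fun A => A != set0) H.
Proof.
elim: H X => [|A H IH] X /=; first by move/eqP->; rewrite cards0.
case/andP=> /andP[nA sAX] oH; have [-> ->] := IH _ oH; split; last by rewrite nA.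
rewrite cardsD (setIidPr sAX) subnKC //; exact: subset_leq_card.
Qed.
Definition okX {n} (X : {set 'I_n}) (H : seq {set 'I_n}) (v : 'I_n)
  (S : {set 'I_n}) : bool :=
  [forall u in S :&: X, (blk H u < blk H v)%N] &&
  ((blk H v == 0)%N || [exists u in S, blk H u == (blk H v).-1]).

Lemma tower_auxP n (G : pgraph n) H X fuel :
  opart X H -> (size H <= fuel)%N ->
  (tower_aux G fuel X == H) = [forall v in X, okX X H v (G v)].
Proof.
elim: H X fuel => [|A H IH] X fuel.
  move=> /= /eqP ->; case: fuel => [|f] _ /=; last rewrite eqxx.
    by symmetry; apply/forallP => v; rewrite inE.
  by symmetry; apply/forallP => v; rewrite inE.
move=> oX; have oX' := oX; move: oX' => /= /andP[/andP[nA sAX] oH].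
case: fuel => [|f] //=; rewrite ltnS => sf.
have XnE : (X == set0) = false.
  apply/negbTE; apply: contra nA => /eqP X0; rewrite -subset0 -X0 //.
rewrite XnE eqseq_cons.
set S := [set v in X | G v :&: X == set0].
have inAb : forall u, u \in A -> ~~ (blk H u < size H)%N.
  by move=> u uA; rewrite -(opart_mem u oH) inE uA.
apply/andP/forallP => [[/eqP SA]|hall].
  rewrite SA (IH _ _ oH sf) => /forallP hIH v; apply/implyP => vX.
  rewrite /okX blk_cons; case: ifP => vA.
    rewrite eqxx /= andbT; apply/forallP => u; apply/implyP => uGX.
    exfalso; have : v \in S by rewrite SA.
    rewrite inE vX /= => /eqP GX0; by rewrite GX0 inE in uGX.
  have vXA : v \in X :\: A by rewrite inE vA vX.
  have /andP[/forallP hv1 hv2] := implyP (hIH v) vXA.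
  apply/andP; split.
    apply/forallP => u; apply/implyP => uGX; rewrite blk_cons.
    case: ifP => // uA; rewrite ltnS.
    apply: (implyP (hv1 u)); move: uGX; rewrite !inE uA; by [].
  rewrite /=; have [b0|bn0] := eqVneq (blk H v) 0%N.
    have : v \notin S by rewrite SA vA.
    rewrite inE vX /= => /set0Pn[u uGX].
    apply/existsP; exists u; rewrite (setIP uGX).1 /= blk_cons.
    case: ifP => uA; first by rewrite b0.
    have uXA : u \in G v :&: (X :\: A).
      by move: uGX; rewrite !inE uA.
    by have := implyP (hv1 u) uXA; rewrite b0.
  move: hv2; rewrite (negbTE bn0) /= => /existsP[u /andP[uG /eqP bu]].
  apply/existsP; exists u; rewrite uG /= blk_cons.
  have vlt : (blk H v < size H)%N by rewrite -(opart_mem v oH).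
  case: ifP => uA.
    have := inAb u uA; rewrite bu; move: vlt bn0; case: (blk H v) => //= k kl _.
    by rewrite (ltnW kl).
  by rewrite bu prednK // lt0n.
have SA : S = A.
  apply/setP => v; rewrite inE.
  have [vA|vA] := boolP (v \in A).
    rewrite (subsetP sAX _ vA) /=.
    have /andP[/forallP h1 _] := implyP (hall v) (subsetP sAX _ vA).
    apply/eqP/setP => u; rewrite in_set0; apply: negbTE; apply/negP => uGX.
    by have := implyP (h1 u) uGX; rewrite !blk_cons vA.
  apply/negbTE; apply/negP => /andP[vX /eqP GX0].
  have /andP[_ h2] := implyP (hall v) vX.
  move: h2; rewrite blk_cons (negbTE vA) /= => /existsP[u /andP[uG /eqP bu]].
  have vXA : v \in X :\: A by rewrite inE vA vX.
  have vlt : (blk H v < size H)%N by rewrite -(opart_mem v oH).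
  have uX : u \in X by rewrite (opart_mem u oX) bu /= ltnS ltnW.
  by move/setP: GX0 => /(_ u); rewrite !inE uG uX.
split; first by rewrite SA.
rewrite SA (IH _ _ oH sf); apply/forallP => v; apply/implyP => vXA.
have vA : v \notin A by move: vXA; rewrite inE => /andP[].
have vX : v \in X by move: vXA; rewrite inE => /andP[].
have /andP[/forallP hv1 hv2] := implyP (hall v) vX.
rewrite blk_cons (negbTE vA) in hv1 hv2.
apply/andP; split.
  apply/forallP => u; apply/implyP => uGXA.
  have uA : u \notin A by move: uGXA; rewrite !inE => /andP[_ /andP[]].
  have uGX : u \in G v :&: X by move: uGXA; rewrite !inE => /andP[-> /andP[]].
  by have := implyP (hv1 u) uGX; rewrite blk_cons (negbTE uA).
have [b0|bn0] := eqVneq (blk H v) 0%N; first by rewrite b0.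
move: hv2 => /= /existsP[u /andP[uG]]; rewrite blk_cons.
case: ifP => uA; first by rewrite eq_sym (negbTE bn0).
move=> /eqP bu; apply/existsP; exists u; by rewrite uG -bu /=.
Qed.
Definition okT {n} (H : seq {set 'I_n}) (v : 'I_n) (S : {set 'I_n}) : bool :=
  [forall u in S, (blk H u < blk H v)%N] &&
  ((blk H v == 0)%N || [exists u in S, blk H u == (blk H v).-1]).

Lemma towerP n (G : pgraph n) H :
  opart [set: 'I_n] H -> (tower G == H) = [forall v, okT H v (G v)].
Proof.
move=> oH; rewrite /tower tower_auxP //; last first.
  by have := opart_size oH; rewrite cardsT card_ord.
apply: eq_forallb => v; rewrite inE /= /okX /okT setIT; by [].
Qed.

Definition erel {n} (G : pgraph n) : rel 'I_n := fun a b => a \in G b.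

Lemma ok_dag n (G : pgraph n) H :
  [forall v, okT H v (G v)] -> is_dag G.
Proof.
move=> /forallP hok.
have edge : forall a b, a \in G b -> (blk H a < blk H b)%N.
  move=> a b aG; have /andP[/forallP h1 _] := hok b; exact: (implyP (h1 a) aG).
apply/forallP => u; apply/forallP => v; apply/implyP => uGv.
apply/negP => /connectP[p pth lst].
have : (blk H v <= blk H u)%N.
  rewrite lst; elim: p v pth {lst uGv} => [|x p IHp] v //= /andP[vx px].
  exact: leq_trans (ltnW (edge _ _ vx)) (IHp _ px).
by rewrite leqNgt edge.
Qed.
Lemma dag_source n (G : pgraph n) (R : {set 'I_n}) :
  is_dag G -> R != set0 -> exists2 v, v \in R & G v :&: R == set0.
Proof.
move=> dG /set0Pn[v0 v0R].
pose anc v := #|[set w | connect (erel G) w v]|.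
suff : forall k v, (anc v <= k)%N -> v \in R -> exists2 v, v \in R & G v :&: R == set0.
  by move/(_ (anc v0) v0 (leqnn _) v0R).
elim=> [|k IH] v hk vR.
  have : (0 < anc v)%N by apply/card_gt0P; exists v; rewrite inE connect0.
  by rewrite lt0n -leqn0 hk.
have [h|/set0Pn[u uGR]] := boolP (G v :&: R == set0); first by exists v.
have uGv : u \in G v by case/setIP: uGR.
apply: (IH u) _ (setIP uGR).2.
rewrite -ltnS; apply: leq_trans hk; apply: proper_card; apply/properP; split.
  apply/subsetP => w; rewrite !inE => cwu.
  by apply: connect_trans cwu (connect1 _).
exists v; first by rewrite inE connect0.
rewrite inE; have := forallP dG u => /forallP/(_ v)/implyP/(_ uGv); by [].
Qed.

Lemma dag_opart n (G : pgraph n) fuel (R : {set 'I_n}) :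
  is_dag G -> (#|R| <= fuel)%N -> opart R (tower_aux G fuel R).
Proof.
move=> dG; elim: fuel R => [|f IH] R /=.
  by rewrite leqn0 cards_eq0.
move=> hR; case: ifP => Rn /=; first by rewrite Rn.
set S := [set v in R | G v :&: R == set0].
have sSR : S \subset R by apply/subsetP => v; rewrite inE => /andP[].
have nS : S != set0.
  have [v vR vs] := dag_source dG (negbT Rn).
  by apply/set0Pn; exists v; rewrite inE vR.
rewrite nS sSR /=; apply: IH.
rewrite -ltnS; apply: leq_trans hR.
rewrite cardsD (setIidPr sSR) ltn_subrL card_gt0 nS /=.
apply: leq_trans (subset_leq_card sSR); by rewrite card_gt0.
Qed.

Lemma size_tower_aux n (G : pgraph n) fuel R : (size (tower_aux G fuel R) <= fuel)%N.
Proof. by elim: fuel R => [|f IH] R //=; case: ifP => //= _; rewrite ltnS. Qed.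

Lemma dag_tower n (G : pgraph n) : is_dag G -> opart [set: 'I_n] (tower G).
Proof. by move=> dG; apply: dag_opart => //; rewrite cardsT card_ord. Qed.
Lemma forall_andb (T : finType) (a b : pred T) :
  [forall v, a v && b v] = [forall v, a v] && [forall v, b v].
Proof.
apply/forallP/andP => [h|[/forallP h1 /forallP h2] v]; last by rewrite h1 h2.
by split; apply/forallP => v; case/andP: (h v).
Qed.

Lemma sum_prod_ffun (R : realFieldType) n (q : R) (B : 'I_n -> pred {set 'I_n}) :
  \sum_(G : pgraph n | [forall v, B v (G v)]) \prod_v q ^+ #|G v| =
  \prod_v \sum_(S | B v S) q ^+ #|S|.
Proof.
under eq_bigr do rewrite big_mkcond.
rewrite bigA_distr_bigA big_mkcond /=; apply: eq_bigr => G _.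
case: forallP => [h|/forallP h].
  by apply: eq_bigr => v _; rewrite h.
move/forallPn: h => [v hv]; rewrite (bigD1 v) //= (negbTE hv) mul0r; by [].
Qed.

Definition qq (R : realFieldType) (p : R) := p / (1 - p).

Lemma weightE (R : realFieldType) (p : R) n (G : pgraph n) :
  dag_weight p G = \prod_v (qq p) ^+ #|G v|.
Proof. by rewrite /dag_weight /nedges (big_morph _ (exprD _) (expr0 _)). Qed.

Definition Zs (R : realFieldType) (p : R) n (H : seq {set 'I_n})
  (B : 'I_n -> pred {set 'I_n}) (v : 'I_n) : R :=
  \sum_(S | okT H v S && B v S) (qq p) ^+ #|S|.

Lemma num_sum (R : realFieldType) (p : R) n (H : seq {set 'I_n})
  (E : pred (pgraph n)) (B : 'I_n -> pred {set 'I_n}) :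
  opart [set: 'I_n] H ->
  (forall G, E G = [forall v, B v (G v)] && (tower G == H)) ->
  \sum_(G | is_dag G && E G) dag_weight p G = \prod_v Zs p H B v.
Proof.
move=> oH hE; rewrite -sum_prod_ffun.
rewrite (eq_bigl (fun G : pgraph n => [forall v, okT H v (G v) && B v (G v)]));
  last first.
  move=> G /=; rewrite hE towerP // [RHS]forall_andb.
  have := @ok_dag n G H.
  case: [forall v, okT H v (G v)]; case: [forall v, B v (G v)]; case: (is_dag G);
    by move=> // /(_ isT).
apply: eq_bigr => G _; exact: weightE.
Qed.
Lemma qq_gt0 (R : realFieldType) (p : R) : 0 < p < 1 -> 0 < qq p.
Proof. by case/andP=> p0 p1; rewrite /qq divr_gt0 // subr_gt0. Qed.

Lemma D_gt0 (R : realFieldType) (p : R) n : 0 < p < 1 ->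
  0 < \sum_(G : pgraph n | is_dag G) dag_weight p G.
Proof.
move=> hp; have q0 := qq_gt0 hp.
pose G0 : pgraph n := [ffun _ => set0].
have dG0 : is_dag G0.
  by apply/forallP => u; apply/forallP => v; rewrite ffunE inE.
rewrite (bigD1 G0) //=.
have h1 : 0 < dag_weight p G0 by rewrite /dag_weight exprn_gt0.
have h2 : 0 <= \sum_(G | is_dag G && (G != G0)) dag_weight p G.
  by apply: sumr_ge0 => G _; rewrite /dag_weight exprn_ge0 // ltW.
lra.
Qed.

Lemma forall_true (T : finType) : [forall v : T, true] = true.
Proof. by apply/forallP. Qed.

Lemma cond_formula (R : realFieldType) (p : R) n (H : seq {set 'I_n})
  (E : pred (pgraph n)) (B : 'I_n -> pred {set 'I_n}) :
  0 < p < 1 -> opart [set: 'I_n] H ->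
  (forall G, E G = [forall v, B v (G v)]) ->
  condPrD p E (fun G => tower G == H) =
  \prod_v (Zs p H B v / Zs p H (fun _ _ => true) v).
Proof.
move=> hp oH hE; rewrite /condPrD /PrD.
rewrite (@num_sum R p n H (fun G => E G && (tower G == H)) B oH); last first.
  by move=> G; rewrite hE.
rewrite (@num_sum R p n H (fun G => tower G == H) (fun _ _ => true) oH); last first.
  by move=> G; rewrite forall_true.
rewrite prodf_div.
have := D_gt0 n hp; set D := \sum_(G | _) _ => D0.
have Dn : D != 0 by rewrite gt_eqF.
by rewrite invfM invrK [_^-1 * D]mulrC mulrA -[_ * D^-1 * D]mulrA mulVf // mulr1.
Qed.
Lemma iop_opart_gen n (H : seq {set 'I_n}) (X : {set 'I_n}) :
  all (fun A => A != set0) H -> \bigcup_(A <- H) A = X ->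
  (forall i j, (i < size H)%N -> (j < size H)%N -> i != j ->
     [disjoint nth set0 H i & nth set0 H j]) ->
  opart X H.
Proof.
elim: H X => [|A H IH] X /=; first by rewrite big_nil => _ <-.
case/andP=> nA aH; rewrite big_cons => UX PW.
have dAU : [disjoint A & \bigcup_(B <- H) B].
  rewrite -setI_eq0; apply/eqP/setP => x; rewrite !inE; apply/negbTE/negP.
  case/andP=> xA; rewrite bigcup_seq => /bigcupP[B BH xB].
  have := PW 0%N (index B H).+1 isT; rewrite /= ltnS index_mem BH => /(_ isT isT).
  rewrite nth_index // => dAB; by rewrite (disjointFr dAB xA) in xB.
rewrite nA -UX subsetUl /=; apply: IH => //.
  by rewrite setDUl setDv set0U; apply/esym/setDidPl; rewrite disjoint_sym.
move=> i j il jl ij; exact: (PW i.+1 j.+1 il jl ij).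
Qed.

Lemma iop_opart n (H : seq {set 'I_n}) :
  is_ordered_partition H -> opart [set: 'I_n] H.
Proof.
case/andP=> /andP[aH /eqP UH] /forallP PW; apply: iop_opart_gen => // i j il jl ij.
have := PW (Ordinal il) => /forallP/(_ (Ordinal jl))/implyP; apply; by [].
Qed.

Lemma blk_lt n (H : seq {set 'I_n}) u : opart [set: 'I_n] H -> (blk H u < size H)%N.
Proof. by move=> oH; rewrite -(opart_mem u oH) inE. Qed.

Lemma okT_exists n (H : seq {set 'I_n}) u : opart [set: 'I_n] H -> exists S, okT H u S.
Proof.
move=> oH; have bl := blk_lt u oH.
case eb: (blk H u) => [|k].
  by exists set0; rewrite /okT eb eqxx andbT; apply/forallP => w; rewrite inE.
have kl : (k < size H)%N by rewrite eb in bl; apply: ltnW.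
exists (nth set0 H k); rewrite /okT eb /=; apply/andP; split.
  apply/forallP => w; apply/implyP; rewrite (opart_nth _ oH kl) => /eqP ->; by [].
have [_ /all_nthP] := opart_sum oH => /(_ set0 k kl) /set0Pn[w wk].
apply/existsP; exists w; rewrite wk /= -(opart_nth _ oH kl); by [].
Qed.

Lemma Zs_gt0 (R : realFieldType) (p : R) n (H : seq {set 'I_n}) u :
  0 < p < 1 -> opart [set: 'I_n] H -> 0 < Zs p H (fun _ _ => true) u.
Proof.
move=> hp oH; have q0 := qq_gt0 hp; have [S hS] := okT_exists u oH.
rewrite /Zs (bigD1 S) /=; last by rewrite hS.
have h1 : 0 < qq p ^+ #|S| by rewrite exprn_gt0.
have h2 : 0 <= \sum_(i | (okT H u i && true) && (i != S)) qq p ^+ #|i|.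
  by apply: sumr_ge0 => T _; rewrite exprn_ge0 // ltW.
lra.
Qed.
Lemma eq_Zs (R : realFieldType) (p : R) n (H : seq {set 'I_n}) B B' u :
  (forall T, B u T = B' u T) -> Zs p H B u = Zs p H B' u.
Proof. by move=> h; apply: eq_bigl => T; rewrite h. Qed.

Definition rZ (R : realFieldType) (p : R) n (H : seq {set 'I_n})
  (S : {ffun 'I_n -> {set 'I_n}}) (u : 'I_n) : R :=
  Zs p H (fun u T => T == S u) u / Zs p H (fun _ _ => true) u.

Lemma single_cond (R : realFieldType) (p : R) n (H : seq {set 'I_n})
   (S : {ffun 'I_n -> {set 'I_n}}) v :
  0 < p < 1 -> opart [set: 'I_n] H ->
  condPrD p (fun G : pgraph n => G v == S v) (fun G => tower G == H) = rZ p H S v.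
Proof.
move=> hp oH.
rewrite (@cond_formula R p n H _ (fun u T => (u == v) ==> (T == S u))) //; last first.
  move=> G; apply/eqP/forallP => [h u|h]; last by move/(_ v): h; rewrite eqxx => /eqP.
  by apply/implyP => /eqP ->; rewrite h.
rewrite (bigD1 v) //= big1 ?mulr1.
  by rewrite /rZ (@eq_Zs R p n H _ (fun u T => T == S u)) // => T; rewrite eqxx.
move=> u uv; rewrite (@eq_Zs R p n H _ (fun _ _ => true)); last first.
  by move=> T; rewrite (negbTE uv).
by rewrite divff // gt_eqF // Zs_gt0.
Qed.

Lemma partb1 (R : realFieldType) (p : R) n (H : seq {set 'I_n}) (J : {set 'I_n})
   (S : {ffun 'I_n -> {set 'I_n}}) :
  0 < p < 1 -> opart [set: 'I_n] H ->
  condPrD p (fun G : pgraph n => [forall v in J, G v == S v])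
            (fun G : pgraph n => tower G == H) =
  \prod_(v in J) condPrD p (fun G : pgraph n => G v == S v)
                           (fun G : pgraph n => tower G == H).
Proof.
move=> hp oH.
under [RHS]eq_bigr do rewrite single_cond //.
rewrite (@cond_formula R p n H _ (fun u T => (u \in J) ==> (T == S u))) //.
rewrite [RHS]big_mkcond /=; apply: eq_bigr => u _.
case: ifP => uJ.
  by rewrite /rZ (@eq_Zs R p n H _ (fun u T => T == S u)) // => T; rewrite uJ.
rewrite (@eq_Zs R p n H _ (fun _ _ => true)); last by move=> T; rewrite uJ.
by rewrite divff // gt_eqF // Zs_gt0.
Qed.
Lemma eq_Zs2 (R : realFieldType) (p : R) n (H : seq {set 'I_n}) B B' u :
  (forall T, okT H u T && B u T = okT H u T && B' u T) -> Zs p H B u = Zs p H B' u.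
Proof. by move=> h; apply: eq_bigl => T; rewrite h. Qed.

Lemma partb2 (R : realFieldType) (p : R) n (H : seq {set 'I_n}) (v : 'I_n) :
  0 < p < 1 -> opart [set: 'I_n] H -> v \in nth set0 H 0 ->
  condPrD p (fun G : pgraph n => G v == set0)
            (fun G : pgraph n => tower G == H) = 1.
Proof.
move=> hp oH vH.
have sz : (0 < size H)%N by case: H oH vH => //=; rewrite inE.
have b0 : blk H v = 0%N by apply/eqP; rewrite -(opart_nth _ oH sz).
have := @single_cond R p n H [ffun _ => set0] v hp oH; rewrite ffunE => -> ; rewrite /rZ.
rewrite (@eq_Zs2 R p n H _ (fun _ _ => true)); first by rewrite divff // gt_eqF // Zs_gt0.
move=> T; rewrite ffunE /okT b0 /= !andbT.
case: (T =P set0) => [->|]; first by rewrite andbT.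
move=> /eqP/set0Pn[u uT]; rewrite andbF; apply/esym/negbTE; apply/negP => /forallP/(_ u).
by rewrite uT.
Qed.
Lemma sum_pred1 (R : realFieldType) n (P : pred {set 'I_n}) (F : {set 'I_n} -> R) S :
  \sum_(T | P T && (T == S)) F T = if P S then F S else 0.
Proof.
case: ifP => hS.
  rewrite (eq_bigl (pred1 S)) ?big_pred1_eq // => T /=.
  by case: (T =P S) => [->|]; rewrite ?hS ?andbF.
rewrite big_pred0 // => T; case: (T =P S) => [->|]; by rewrite ?hS ?andbF.
Qed.

Lemma okT_cond n (H : seq {set 'I_n}) v j S :
  opart [set: 'I_n] H -> (1 <= j < size H)%N -> blk H v = j ->
  okT H v S = (S \subset \bigcup_(i < j) nth set0 H i) &&
              (S :&: nth set0 H j.-1 != set0).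
Proof.
move=> oH /andP[j1 jl] bv; rewrite /okT bv.
have -> : (j == 0)%N = false by case: j j1 {jl bv}.
have jl' : (j.-1 < size H)%N by apply: leq_ltn_trans jl; apply: leq_pred.
congr andb.
  apply/forallP/subsetP => [h u uS|h u].
    have ul : (blk H u < j)%N by apply: (implyP (h u) uS).
    apply/bigcupP; exists (Ordinal ul) => //=.
    by rewrite (opart_nth _ oH (blk_lt u oH)).
  apply/implyP => /h /bigcupP[i _ ui].
  have il : (i < size H)%N by apply: ltn_trans jl.
  by move: ui; rewrite (opart_nth _ oH il) => /eqP ->.
apply/existsP/set0Pn => [[u /andP[uS bu]]|[u /setIP[uS uj]]].
  by exists u; rewrite inE uS (opart_nth _ oH jl').
by exists u; rewrite uS -(opart_nth _ oH jl').
Qed.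

Lemma partb3 (R : realFieldType) (p : R) n (H : seq {set 'I_n}) j :
  0 < p < 1 -> opart [set: 'I_n] H -> (1 <= j < size H)%N ->
  exists C : R, forall v : 'I_n, v \in nth set0 H j ->
    forall S : {set 'I_n},
      condPrD p (fun G : pgraph n => G v == S)
                (fun G : pgraph n => tower G == H) =
      (if (S \subset \bigcup_(i < j) nth set0 H i) &&
          (S :&: nth set0 H j.-1 != set0)
       then C * (p / (1 - p)) ^+ #|S| else 0).
Proof.
move=> hp oH hj; have jl : (j < size H)%N by case/andP: hj.
pose okJ (T : {set 'I_n}) := [forall u in T, (blk H u < j)%N] && [exists u in T, blk H u == j.-1].
exists (\sum_(T | okJ T) qq p ^+ #|T|)^-1 => v vj S.
have bv : blk H v = j by apply/eqP; rewrite -(opart_nth _ oH jl).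
have := @single_cond R p n H [ffun _ => S] v hp oH; rewrite ffunE => ->; rewrite /rZ.
have -> : Zs p H (fun _ _ => true) v = \sum_(T | okJ T) qq p ^+ #|T|.
  apply: eq_bigl => T; rewrite andbT /okT bv /okJ.
  by have -> : (j == 0)%N = false by case/andP: hj; case: (j).
rewrite /Zs (eq_bigl (fun T => okT H v T && (T == S))); last first.
  by move=> T; rewrite ffunE.
rewrite sum_pred1 (okT_cond S oH hj bv).
case: ifP => _; last by rewrite mul0r.
by rewrite mulrC.
Qed.
Lemma pow_sum (R : realFieldType) n (x : R) (X : {set 'I_n}) :
  \sum_(T : {set 'I_n} | T \subset X) x ^+ #|T| = (1 + x) ^+ #|X|.
Proof.
rewrite addrC exprD1n.
rewrite (partition_big (fun T : {set 'I_n} => inord #|T| : 'I_#|X|.+1) xpredT) //.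
apply: eq_bigr => k _.
rewrite (eq_bigr (fun _ => x ^+ k)); last first.
  move=> T /andP[sTX /eqP <-]; rewrite inordK // ltnS; exact: subset_leq_card.
rewrite sumr_const; congr (_ *+ _).
rewrite -cards_draws; apply: eq_card => T; rewrite [in LHS]unfold_in /= !inE.
case sTX: (T \subset X) => //=.
have hl : (#|T| < #|X|.+1)%N by rewrite ltnS subset_leq_card.
by rewrite -(inj_eq val_inj) /= inordK.
Qed.
Definition Uset {n} (H : seq {set 'I_n}) (k : nat) : {set 'I_n} :=
  [set u | (blk H u < k)%N].

Lemma subU n (H : seq {set 'I_n}) k (T : {set 'I_n}) :
  (T \subset Uset H k) = [forall u in T, (blk H u < k)%N].
Proof.
apply/subsetP/forallP => [h u|h u uT]; first by apply/implyP => /h; rewrite inE.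
by rewrite inE; apply: (implyP (h u)).
Qed.

Lemma Zs_blk (R : realFieldType) (p : R) n (H : seq {set 'I_n}) v :
  Zs p H (fun _ _ => true) v =
  if blk H v is k.+1 then (1 + qq p) ^+ #|Uset H k.+1| - (1 + qq p) ^+ #|Uset H k|
  else 1.
Proof.
rewrite /Zs /okT; case eb: (blk H v) => [|k].
  rewrite (eq_bigl (fun T : {set 'I_n} => T \subset Uset H 0)); last by move=> T; rewrite subU !andbT.
  rewrite pow_sum (_ : #|Uset H 0| = 0%N) // ; apply/eqP; rewrite cards_eq0.
  by apply/eqP/setP => u; rewrite !inE.
rewrite (eq_bigl (fun T : {set 'I_n} => (T \subset Uset H k.+1) && ~~ (T \subset Uset H k))); last first.
  move=> T; rewrite andbT !subU /=.
  case h: [forall u in T, (blk H u < k.+1)%N] => //=.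
  apply/existsP/forallPn => [[u /andP[uT /eqP bu]]|[u]].
    by exists u; rewrite uT bu ltnn.
  rewrite negb_imply => /andP[uT bu]; exists u; rewrite uT /=.
  have := implyP (forallP h u) uT; rewrite ltnS leq_eqVlt (negbTE bu) orbF; by [].
rewrite -!pow_sum (bigID (fun T : {set 'I_n} => T \subset Uset H k) (fun T : {set 'I_n} => T \subset Uset H k.+1)) /=.
rewrite (@eq_bigl _ _ _ _ _ (fun T : {set 'I_n} => (T \subset Uset H k.+1) && (T \subset Uset H k)) (fun T : {set 'I_n} => T \subset Uset H k) (fun T : {set 'I_n} => qq p ^+ #|T|)); last first.
  move=> T /=; case h: (T \subset Uset H k); rewrite ?andbF ?andbT //.
  apply: subset_trans h _; apply/subsetP => u; rewrite !inE; exact: ltnW.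
by rewrite addrC addrK.
Qed.
Lemma card_U n (H : seq {set 'I_n}) k :
  opart [set: 'I_n] H -> (k <= size H)%N ->
  #|Uset H k| = (\sum_(i < k) #|nth set0 H i|)%N.
Proof.
move=> oH; elim: k => [|k IH] kl.
  rewrite big_ord0; apply/eqP; rewrite cards_eq0; apply/eqP/setP => u; by rewrite !inE.
have kl' : (k < size H)%N by [].
have -> : (\sum_(i < k.+1) #|nth set0 H i|)%N =
          (\sum_(i < k) #|nth set0 H i| + #|nth set0 H k|)%N.
  by rewrite big_ord_recr.
rewrite -IH ?(ltnW kl) // -(cardsID (Uset H k) (Uset H k.+1)).
have -> : Uset H k.+1 :&: Uset H k = Uset H k.
  apply/setP => u; rewrite !inE; case h: (blk H u < k)%N; rewrite ?andbT ?andbF //; by rewrite ltnS ltnW.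
have -> : Uset H k.+1 :\: Uset H k = nth set0 H k.
  apply/setP => u; rewrite !inE (opart_nth _ oH kl') ltnS.
  by case: (ltngtP (blk H u) k).
by [].
Qed.
Lemma prod_blk (R : realFieldType) n (H : seq {set 'I_n}) (F : nat -> R) :
  opart [set: 'I_n] H ->
  \prod_(v : 'I_n) F (blk H v) = \prod_(k < size H) F k ^+ #|nth set0 H k|.
Proof.
move=> oH; have bl := fun v => blk_lt v oH.
rewrite (partition_big (fun v => Ordinal (bl v)) xpredT) //.
apply: eq_bigr => k _; rewrite -prodr_const; apply: eq_big => v.
  by rewrite -(inj_eq val_inj) /= (opart_nth _ oH (ltn_ord k)).
by move/eqP <-.
Qed.
Lemma Zk_alg (R : realFieldType) (p : R) (m b : nat) : 0 < p < 1 ->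
  (1 + qq p) ^+ (m + b) - (1 + qq p) ^+ m = (1 - (1 - p) ^+ b) / (1 - p) ^+ (m + b).
Proof.
case/andP=> p0 p1; have a0 : 1 - p != 0 by rewrite subr_eq0 eq_sym lt_eqF.
have e : 1 + qq p = (1 - p)^-1 by rewrite /qq; field.
rewrite e !exprVn exprD; have am : (1 - p) ^+ m != 0 by rewrite expf_neq0.
have ab : (1 - p) ^+ b != 0 by rewrite expf_neq0.
field; by rewrite am ab.
Qed.
Definition Wh (R : realFieldType) (p : R) (h : seq nat) : R :=
  \prod_(1 <= k < size h)
     ((1 - (1 - p) ^+ nth 0%N h k.-1) ^+ nth 0%N h k /
      (1 - p) ^+ (nth 0%N h k * (\sum_(i < k) nth 0%N h i))%N).

Lemma sum_tower_H (R : realFieldType) (p : R) n (H : seq {set 'I_n}) :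
  0 < p < 1 -> opart [set: 'I_n] H ->
  \sum_(G | is_dag G && (tower G == H)) dag_weight p G =
  Wh p (map (fun A : {set 'I_n} => #|A|) H).
Proof.
move=> hp oH.
rewrite (@num_sum R p n H (fun G => tower G == H) (fun _ _ => true) oH); last first.
  by move=> G; rewrite forall_true.
under eq_bigr do rewrite Zs_blk.
rewrite (prod_blk (fun k => if k is k'.+1 then
     (1 + qq p) ^+ #|Uset H k'.+1| - (1 + qq p) ^+ #|Uset H k'| else 1) oH).
rewrite /Wh size_map -(big_mkord xpredT (fun k => (if k is k'.+1 then
     (1 + qq p) ^+ #|Uset H k'.+1| - (1 + qq p) ^+ #|Uset H k'| else 1)
      ^+ #|nth set0 H k|)).
have nE : forall i, (i < size H)%N ->
  nth 0%N (map (fun A : {set 'I_n} => #|A|) H) i = #|nth set0 H i|.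
  by move=> i il; rewrite (nth_map set0).
case: (posnP (size H)) => [->|sp]; first by rewrite !big_geq.
rewrite big_ltn // expr1n mul1r; apply: eq_big_nat => k /andP[k1 kl].
case: k k1 kl => [|k] // _ kl.
have sE : forall j, (j <= size H)%N ->
   (\sum_(i < j) nth 0%N (map (fun A : {set 'I_n} => #|A|) H) i)%N = #|Uset H j|.
  move=> j jl; rewrite card_U //; apply: eq_bigr => i _; apply: nE.
  exact: leq_trans (ltn_ord i) jl.
have kl' : (k < size H)%N by apply: ltnW.
rewrite /= !nE // sE //.
have cU : #|Uset H k.+1| = (#|Uset H k| + #|nth set0 H k|)%N.
  rewrite !card_U // ?(ltnW kl') //.
  by rewrite big_ord_recr.
by rewrite cU Zk_alg // expr_div_n -exprM mulnC.
Qed.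
Lemma fact_neq0 (R : realFieldType) m : (m`!)%:R != 0 :> R.
Proof. by rewrite pnatr_eq0 -lt0n fact_gt0. Qed.

Lemma prod_fact_neq0 (R : realFieldType) (h : seq nat) :
  \prod_(x <- h) (x`!)%:R != 0 :> R.
Proof.
rewrite prodf_seq_neq0; apply/allP => x _ /=; exact: fact_neq0.
Qed.

Lemma count_opart (R : realFieldType) n (h : seq nat) (X : {set 'I_n}) :
  all (fun x => 0 < x)%N h -> sumn h = #|X| ->
  \sum_(T : (size h).-tuple {set 'I_n} |
        opart X T && (map (fun A : {set 'I_n} => #|A|) T == h)) (1 : R) =
  (#|X|`!)%:R / \prod_(x <- h) (x`!)%:R.
Proof.
elim: h X => [|k h IH] X.
  move=> _ /= X0; rewrite big_nil divr1 -X0 /=.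
  have X0' : X == set0 by rewrite -cards_eq0 -X0.
  rewrite (big_pred1 [tuple]) // => T /=.
  by rewrite (tuple0 T) /= X0' !eqxx.
case/andP=> k0 ah /= sX.
rewrite (reindex (fun pr : {set 'I_n} * (size h).-tuple {set 'I_n} =>
                    [tuple of pr.1 :: pr.2])) /=; last first.
  exists (fun t => (thead t, [tuple of behead t])) => [[A T] _|t _] /=.
    by congr (_, _); apply: val_inj.
  by rewrite -tuple_eta.
rewrite -(pair_big_dep xpredT (fun (A : {set 'I_n}) (T : (size h).-tuple {set 'I_n}) => 
   ((A != set0) && (A \subset X) && opart (X :\: A) T) &&
   ((#|A| == k) && (map (fun A : {set 'I_n} => #|A|) T == h))) (fun _ _ => 1)) /=.
rewrite (eq_bigr (fun A : {set 'I_n} => if (A \subset X) && (#|A| == k) then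
   (#|X :\: A|`!)%:R / \prod_(x <- h) (x`!)%:R else 0)); last first.
  move=> A _; case: ifP => [/andP[sAX /eqP cA]|hA].
    rewrite -IH //; last by rewrite cardsD (setIidPr sAX) cA -sX addKn.
    apply: eq_bigl => T; rewrite sAX cA eqxx /= andbT.
    by have -> : A != set0 by rewrite -card_gt0 cA.
  rewrite big_pred0 // => T; case: (A \subset X) hA => //=; rewrite ?andbF //.
  by move=> ->; rewrite !andbF.
rewrite -big_mkcond /=.
have kX : (k <= #|X|)%N by rewrite -sX leq_addr.
rewrite (eq_bigr (fun _ => (#|X| - k)`!%:R / \prod_(x <- h) (x`!)%:R)); last first.
  by move=> A /andP[sAX /eqP cA]; rewrite cardsD (setIidPr sAX) cA.
rewrite sumr_const (eq_card (B := [set A : {set 'I_n} | A \subset X & #|A| == k])); last first.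
  by move=> A; rewrite !inE.
rewrite cards_draws big_cons -(bin_fact kX) !natrM.
have := fact_neq0 R k; have := fact_neq0 R (#|X| - k); have := prod_fact_neq0 R h.
move=> h1 h2 h3; rewrite -mulr_natr; field; by rewrite h1 h3.
Qed.
Lemma Mh (R : realFieldType) (p : R) n (h : seq nat) :
  0 < p < 1 -> is_composition n h ->
  \sum_(G : pgraph n | is_dag G && (tower_vec G == h)) dag_weight p G = tower_w n p h.
Proof.
move=> hp /andP[ah /eqP sh].
pose tp (G : pgraph n) : (size h).-tuple {set 'I_n} :=
  insubd (nseq_tuple (size h) set0) (tower G).
have tpE : forall G, size (tower G) = size h -> val (tp G) = tower G.
  by move=> G e; rewrite val_insubd e eqxx.
rewrite (partition_big tp (fun T : (size h).-tuple {set 'I_n} =>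
   opart [set: 'I_n] T && (map (fun A : {set 'I_n} => #|A|) T == h))); last first.
  move=> G /andP[dG /eqP th]; rewrite tpE; last by rewrite -th size_map.
  by rewrite dag_tower //=; apply/eqP; exact: th.
rewrite (eq_bigr (fun _ => Wh p h)); last first.
  move=> T /andP[oT /eqP mT].
  transitivity (Wh p (map (fun A : {set 'I_n} => #|A|) T)); last by rewrite mT.
  rewrite -(sum_tower_H hp oT).
  apply: eq_bigl => G; case dG: (is_dag G) => //=.
  apply/andP/eqP => [[/eqP th /eqP <-]|tT].
    by rewrite tpE // -th size_map.
  split; first by rewrite /tower_vec tT mT.
  apply/eqP/val_inj; rewrite tpE // tT size_tuple.
  by [].
transitivity ((\sum_(T : (size h).-tuple {set 'I_n} | opart [set: 'I_n] T &&
    (map (fun A : {set 'I_n} => #|A|) T == h)) (1 : R)) * Wh p h).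
  by rewrite mulr_suml; apply: eq_bigr => T _; rewrite mul1r.
rewrite count_opart //; last by rewrite cardsT card_ord.
by rewrite /tower_w /multinom cardsT card_ord mulrC.
Qed.
Lemma map_val_mk n s (l : seq nat) :
  size l = s -> all (fun x => x <= n)%N l ->
  map val [tuple (inord (nth 0%N l i) : 'I_n.+1) | i < s] = l.
Proof.
move=> sl al; apply: (@eq_from_nth _ 0%N); first by rewrite size_map size_tuple.
move=> i; rewrite size_map size_tuple => il.
rewrite (nth_map ord0) ?size_tuple // -(tnth_nth ord0 _ (Ordinal il)) tnth_mktuple /=.
rewrite inordK // ltnS; apply: (allP al); apply: mem_nth; by rewrite sl.
Qed.

Lemma dag_comp n (G : pgraph n) : is_dag G ->
  is_composition n (tower_vec G) /\ (size (tower_vec G) <= n)%N /\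
  all (fun x => x <= n)%N (tower_vec G).
Proof.
move=> dG; have [sE aE] := opart_sum (dag_tower dG).
split; last split.
- rewrite /is_composition /tower_vec sE cardsT card_ord eqxx andbT all_map.
  by apply: sub_all aE => A /=; rewrite card_gt0.
- by rewrite size_map; apply: size_tower_aux.
- rewrite /tower_vec all_map; apply/allP => A _ /=.
  by rewrite -[X in (_ <= X)%N]card_ord max_card.
Qed.

Lemma D_total (R : realFieldType) (p : R) n : 0 < p < 1 ->
  \sum_(G : pgraph n | is_dag G) dag_weight p G = tower_w_total n p.
Proof.
move=> hp; rewrite /tower_w_total.
rewrite (partition_big (fun G : pgraph n => (inord (size (tower_vec G)) : 'I_n.+1)) xpredT) //.
apply: eq_bigr => s _.
under [RHS]eq_bigr => t ct do rewrite -(Mh hp ct).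
pose p2 (G : pgraph n) : s.-tuple 'I_n.+1 :=
  [tuple (inord (nth 0%N (tower_vec G) i) : 'I_n.+1) | i < s].
rewrite (partition_big p2 (fun t : s.-tuple 'I_n.+1 => is_composition n (map val t))).
  apply: eq_bigr => t ct; apply: eq_bigl => G.
  case dG: (is_dag G) => //=.
  have [_ [sl al]] := dag_comp dG.
  have -> : (inord (size (tower_vec G)) == s) = (size (tower_vec G) == s).
    by rewrite -(inj_eq val_inj) /= inordK.
  case: eqP => [ss|sn].
    rewrite -(inj_eq val_inj) /= -(inj_eq (inj_map val_inj)) map_val_mk //.
  symmetry; apply/negbTE; apply/eqP => e; apply: sn.
  by rewrite e size_map size_tuple.
move=> G /andP[dG /eqP ss]; have [cG [sl al]] := dag_comp dG.
have sz : size (tower_vec G) = s by move: ss => /(congr1 val); rewrite /= inordK.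
by rewrite map_val_mk.
Qed.
Unset Implicit Arguments.

Theorem lemma3 (R : realFieldType) (n : nat) (p : R) :
  0 < p < 1 ->
  (forall h : seq nat, is_composition n h ->
     PrD p (fun G : pgraph n => tower_vec G == h) =
     tower_w n p h / tower_w_total n p) /\
  (forall H : seq {set 'I_n}, is_ordered_partition H ->
     (forall (J : {set 'I_n}) (S : {ffun 'I_n -> {set 'I_n}}),
        condPrD p (fun G : pgraph n => [forall v in J, G v == S v])
                  (fun G : pgraph n => tower G == H) =
        \prod_(v in J) condPrD p (fun G : pgraph n => G v == S v)
                                 (fun G : pgraph n => tower G == H)) /\
     (forall v : 'I_n, v \in nth set0 H 0 ->
        condPrD p (fun G : pgraph n => G v == set0)
                  (fun G : pgraph n => tower G == H) = 1) /\
     (forall j : nat, (1 <= j < size H)%N ->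
        exists C : R, forall v : 'I_n, v \in nth set0 H j ->
          forall S : {set 'I_n},
            condPrD p (fun G : pgraph n => G v == S)
                      (fun G : pgraph n => tower G == H) =
            (if (S \subset \bigcup_(i < j) nth set0 H i) &&
                (S :&: nth set0 H j.-1 != set0)
             then C * (p / (1 - p)) ^+ #|S| else 0))).
Proof.
move=> hp; split.
  by move=> h hc; rewrite /PrD Mh // D_total.
move=> H iop; have oH := iop_opart iop; split; last split.
- by move=> J S; apply: partb1.
- by move=> v vH; apply: partb2.
- by move=> j hj; apply: partb3.
Qed.
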